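(* For $\nu\in\mathbb C$ and integers $m\ge0$, $0\le i\le\lfloor m/2\rfloor$, define $$a_i(\nu,m)=q^{-m(m+\nu)}q^{i(3i+\nu-1)}\frac{(-1)^i(q^{2\nu};q^2)_{m-i}(q^2;q^2)_{m-i}}{(q^2;q^2)_i(q^{2\nu};q^2)_i(q^2;q^2)_{m-2i}},$$ and for $m\ge1$, $0\le j\le\lfloor(m-1)/2\rfloor$, define $b_j(\nu,m)=-q^{2j-m-\nu}a_j(\nu+1,m-1)$ (i.e. $b_j(\nu,m+1)=-q^{2j-m-\nu-1}a_j(\nu+1,m)$). Then for every $\nu\in\mathbb C$ with $q^{2\nu+2i}\ne1$ for all integers $i\ge0$, every $m\ge0$ and every $x>0$, $$J_{\nu+m}(xq^m;q^2)=\sum_{i=0}^{\lfloor m/2\rfloor}\frac{a_i(\nu,m)}{x^{m-2i}}J_\nu(xq^i;q^2)+\sum_{j=0}^{\lfloor(m-1)/2\rfloor}\frac{b_j(\nu,m)}{x^{m-1-2j}}J_{\nu-1}(xq^j;q^2).$$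
   Context: Fix $0<q<1$; $(a;q)_0=1$, $(a;q)_k=\prod_{i=0}^{k-1}(1-aq^i)$, $(a;q)_\infty=\prod_{i\ge0}(1-aq^i)$. For $\nu\in\mathbb C$ and $x>0$ the Hahn–Exton $q$-Bessel function is $$J_\nu(x;q^2)=\frac{x^\nu}{(q^2;q^2)_\infty}\sum_{k=0}^\infty\frac{(-1)^kq^{k(k+1)}(q^{2\nu+2k+2};q^2)_\infty}{(q^2;q^2)_k}\,x^{2k}.$$ $\lfloor a\rfloor$ is the largest integer $\le a$; empty sums are zero. *)

(* Defs.v *)
From Stdlib Require Import Reals List.
From Coquelicot Require Import Coquelicot.
Open Scope R_scope.

(* Limit of a complex sequence, taken componentwise (Lim_seq of real and
   imaginary parts).  Equals the true limit whenever the sequence converges. *)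
Definition CLim_seq (u : nat -> C) : C :=
  (real (Lim_seq (fun n => Re (u n))), real (Lim_seq (fun n => Im (u n)))).

Definition csum (n : nat) (f : nat -> C) : C :=
  fold_right Cplus (RtoC 0) (map f (seq 0 n)).

Definition cprod (n : nat) (f : nat -> C) : C :=
  fold_right Cmult (RtoC 1) (map f (seq 0 n)).

Definition cseries (f : nat -> C) : C := CLim_seq (fun n => csum n f).

(* complex power b^z = exp(z ln b) of a positive real base b *)
Definition cpowR (b : R) (z : C) : C :=
  Cmult (RtoC (exp (Re z * ln b)))
        (cos (Im z * ln b), sin (Im z * ln b)).

Definition qpoch (a : C) (p : R) (k : nat) : C :=
  cprod k (fun i => Cminus (RtoC 1) (Cmult a (RtoC (p ^ i)))).

Definition qpoch_inf (a : C) (p : R) : C := CLim_seq (fun k => qpoch a p k).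

Definition HEJ (q : R) (nu : C) (x : R) : C :=
  Cmult (Cdiv (cpowR x nu) (qpoch_inf (RtoC (q ^ 2)) (q ^ 2)))
    (cseries (fun k =>
       Cmult (Cdiv (Cmult (RtoC ((-1) ^ k * q ^ (k * (k + 1))))
                          (qpoch_inf (cpowR q (Cplus (Cmult (RtoC 2) nu)
                                                      (RtoC (INR (2 * k + 2)))))
                                     (q ^ 2)))
                   (qpoch (RtoC (q ^ 2)) (q ^ 2) k))
             (RtoC (x ^ (2 * k))))).

Definition coef_a (q : R) (nu : C) (m i : nat) : C :=
  let q2nu := cpowR q (Cmult (RtoC 2) nu) in
  Cmult (cpowR q (Copp (Cmult (RtoC (INR m)) (Cplus (RtoC (INR m)) nu))))
  (Cmult (cpowR q (Cmult (RtoC (INR i))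
                         (Cplus (RtoC (3 * INR i - 1)) nu)))
   (Cdiv (Cmult (RtoC ((-1) ^ i))
                (Cmult (qpoch q2nu (q ^ 2) (m - i))
                       (qpoch (RtoC (q ^ 2)) (q ^ 2) (m - i))))
         (Cmult (qpoch (RtoC (q ^ 2)) (q ^ 2) i)
                (Cmult (qpoch q2nu (q ^ 2) i)
                       (qpoch (RtoC (q ^ 2)) (q ^ 2) (m - 2 * i)))))).

Definition coef_b (q : R) (nu : C) (m j : nat) : C :=
  Copp (Cmult (cpowR q (Cminus (RtoC (2 * INR j - INR m)) nu))
              (coef_a q (Cplus nu (RtoC 1)) (m - 1) j)).

(* Main.v *)
Require Import Defs.
From Stdlib Require Import Reals List Lia Lra FunctionalExtensionality.
From Coquelicot Require Import Coquelicot.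
Open Scope R_scope.

Lemma fold_plus_c (l : list C) (c : C) :
  fold_right Cplus c l = Cplus (fold_right Cplus (RtoC 0) l) c.
Proof. induction l; simpl. ring. rewrite IHl. ring. Qed.

Lemma fold_mult_c (l : list C) (c : C) :
  fold_right Cmult c l = Cmult (fold_right Cmult (RtoC 1) l) c.
Proof. induction l; simpl. ring. rewrite IHl. ring. Qed.

Lemma csum_S n f : csum (S n) f = Cplus (csum n f) (f n).
Proof.
  unfold csum. rewrite seq_S, map_app, fold_right_app. simpl.
  rewrite fold_plus_c. f_equal. ring.
Qed.

Lemma csum_0 f : csum 0 f = RtoC 0.
Proof. reflexivity. Qed.

Lemma cprod_S n f : cprod (S n) f = Cmult (cprod n f) (f n).
Proof.
  unfold cprod. rewrite seq_S, map_app, fold_right_app. simpl.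
  rewrite fold_mult_c. f_equal. ring.
Qed.

Lemma csum_ext n f g : (forall i, (i < n)%nat -> f i = g i) -> csum n f = csum n g.
Proof.
  induction n; intros H. reflexivity.
  rewrite !csum_S, IHn, H; auto.
Qed.

Lemma csum_plus n f g : csum n (fun i => Cplus (f i) (g i)) = Cplus (csum n f) (csum n g).
Proof. induction n. simpl. unfold csum; simpl; ring. rewrite !csum_S, IHn. ring. Qed.

Lemma csum_scal n c f : csum n (fun i => Cmult c (f i)) = Cmult c (csum n f).
Proof. induction n. unfold csum; simpl; ring. rewrite !csum_S, IHn. ring. Qed.

Lemma csum_shift n f : csum (S n) f = Cplus (f 0%nat) (csum n (fun i => f (S i))).
Proof. induction n. unfold csum; simpl; ring. rewrite csum_S, IHn, (csum_S n (fun i => f (S i))). ring. Qed.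

Lemma csum_zero n f : (forall i, (i < n)%nat -> f i = RtoC 0) -> csum n f = RtoC 0.
Proof. induction n; intros H. reflexivity. rewrite csum_S, IHn, H; auto. ring. Qed.

Definition climit (u : nat -> C) (l : C) :=
  is_lim_seq (fun n => Re (u n)) (Re l) /\ is_lim_seq (fun n => Im (u n)) (Im l).

Lemma climit_CLim u l : climit u l -> CLim_seq u = l.
Proof.
  intros [H1 H2]. unfold CLim_seq.
  rewrite (is_lim_seq_unique _ _ H1), (is_lim_seq_unique _ _ H2). simpl.
  destruct l; reflexivity.
Qed.

Lemma climit_ext u v l : (forall n, u n = v n) -> climit u l -> climit v l.
Proof.
  intros E [H1 H2]; split; eapply is_lim_seq_ext; try eassumption; intros; simpl; rewrite E; auto.
Qed.

Lemma climit_plus u v a b : climit u a -> climit v b ->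
  climit (fun n => Cplus (u n) (v n)) (Cplus a b).
Proof.
  intros [H1 H2] [H3 H4]; split; simpl.
  apply (is_lim_seq_plus' _ _ _ _ H1 H3).
  apply (is_lim_seq_plus' _ _ _ _ H2 H4).
Qed.

Lemma climit_scal u a c : climit u a -> climit (fun n => Cmult c (u n)) (Cmult c a).
Proof.
  intros [H1 H2]; split; simpl.
  - apply is_lim_seq_minus'; apply is_lim_seq_mult'; auto; apply is_lim_seq_const.
  - apply is_lim_seq_plus'; apply is_lim_seq_mult'; auto; apply is_lim_seq_const.
Qed.

Lemma climit_shift u l : climit u l -> climit (fun n => u (S n)) l.
Proof. intros [H1 H2]; split; apply (is_lim_seq_incr_1 (fun n => _ (u n))); auto. Qed.

Lemma climit_unshift u l : climit (fun n => u (S n)) l -> climit u l.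
Proof. intros [H1 H2]; split; apply (is_lim_seq_incr_1 (fun n => _ (u n))); auto. Qed.

Lemma Cmod_le_sum z : Cmod z <= Rabs (Re z) + Rabs (Im z).
Proof.
  destruct z as [a b]. unfold Cmod; simpl.
  rewrite <- (sqrt_pow2 (Rabs a + Rabs b)).
  2: generalize (Rabs_pos a) (Rabs_pos b); lra.
  apply sqrt_le_1_alt.
  assert (E1 := pow2_abs a). assert (E2 := pow2_abs b).
  generalize (Rabs_pos a) (Rabs_pos b); intros. simpl in *. nra.
Qed.

Lemma im_le_Cmod c : Rabs (Im c) <= Cmod c.
Proof.
  assert (H:=Cmod2_alt c). assert (H0:=Cmod_ge_0 c). assert (E:=pow2_abs (Im c)).
  assert (H1 := Rabs_pos (Im c)). simpl in *. nra.
Qed.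

Lemma climit_bound u l B : climit u l -> (forall n, Cmod (u n) <= B) -> Cmod l <= 2 * B.
Proof.
  intros [H1 H2] Hb.
  assert (Ha : forall f : nat -> R, (forall n, Rabs (f n) <= B) ->
             forall r : R, is_lim_seq f r -> Rabs r <= B).
  { intros f Hf r Hr. apply Rabs_le.
    split.
    - assert (Hle := is_lim_seq_le (fun _ => -B) f (-B) r).
      simpl in Hle. apply Hle; auto. intros n; specialize (Hf n); apply Rabs_le_between in Hf; lra.
      apply is_lim_seq_const.
    - assert (Hle := is_lim_seq_le f (fun _ => B) r B).
      simpl in Hle. apply Hle; auto. intros n; specialize (Hf n); apply Rabs_le_between in Hf; lra.
      apply is_lim_seq_const. }
  eapply Rle_trans. apply Cmod_le_sum.
  assert (Rabs (Re l) <= B).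
  { apply (Ha (fun n => Re (u n))); auto. intros n. eapply Rle_trans. apply re_le_Cmod. auto. }
  assert (Rabs (Im l) <= B).
  { apply (Ha (fun n => Im (u n))); auto. intros n. eapply Rle_trans. apply im_le_Cmod. auto. }
  lra.
Qed.

Lemma real_conv (u : nat -> R) (e : nat -> R) :
  (forall n, Rabs (u (S n) - u n) <= e n) -> ex_series e -> exists l : R, is_lim_seq u l.
Proof.
  intros Hd He.
  assert (Hs : ex_series (fun n => u (S n) - u n)).
  { apply (ex_series_le (K:=R_AbsRing) (V:=R_CompleteNormedModule) _ e); auto. }
  destruct Hs as [s Hs].
  exists (u 0%nat + s).
  apply is_lim_seq_incr_1.
  apply (is_lim_seq_ext (fun n => u 0%nat + sum_n (fun k => u (S k) - u k) n)).
  { intros n. induction n. rewrite sum_O. ring. rewrite sum_Sn. unfold plus; simpl.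
    unfold plus in IHn; simpl in IHn. lra. }
  apply is_lim_seq_plus'. apply is_lim_seq_const. exact Hs.
Qed.

Lemma climit_conv u e : (forall n, Cmod (Cminus (u (S n)) (u n)) <= e n) -> ex_series e ->
  exists l, climit u l.
Proof.
  intros Hd He.
  destruct (real_conv (fun n => Re (u n)) e) as [a Ha]; auto.
  { intros n. eapply Rle_trans. 2: apply Hd. eapply Rle_trans. 2: apply re_le_Cmod.
    simpl. right. reflexivity. }
  destruct (real_conv (fun n => Im (u n)) e) as [b Hb]; auto.
  { intros n. eapply Rle_trans. 2: apply Hd. eapply Rle_trans. 2: apply im_le_Cmod.
    simpl. right. reflexivity. }
  exists (a, b). split; auto.
Qed.

Lemma cpowR_add b z w : cpowR b (Cplus z w) = Cmult (cpowR b z) (cpowR b w).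
Proof.
  destruct z as [a1 b1], w as [a2 b2]. unfold cpowR, Cmult, Cplus, RtoC; simpl.
  rewrite !Rmult_plus_distr_r, exp_plus, cos_plus, sin_plus.
  apply injective_projections; simpl; ring.
Qed.

Lemma cpowR_R b r : cpowR b (RtoC r) = RtoC (exp (r * ln b)).
Proof.
  unfold cpowR, Cmult, RtoC; simpl. rewrite Rmult_0_l, cos_0, sin_0.
  apply injective_projections; simpl; ring.
Qed.

Lemma cpowR_nat b n : 0 < b -> cpowR b (RtoC (INR n)) = RtoC (b ^ n).
Proof. intros Hb. rewrite cpowR_R. f_equal. rewrite <- Rpower_pow; auto. Qed.

Lemma cpowR_addn b z n : 0 < b ->
  cpowR b (Cplus z (RtoC (INR n))) = Cmult (cpowR b z) (RtoC (b ^ n)).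
Proof. intros. rewrite cpowR_add, cpowR_nat; auto. Qed.

Lemma cpowR_Cmod b z : Cmod (cpowR b z) = exp (Re z * ln b).
Proof.
  unfold cpowR. rewrite Cmod_mult, Cmod_R, Rabs_pos_eq.
  2: left; apply exp_pos.
  assert (E : Cmod (cos (Im z * ln b), sin (Im z * ln b)) = 1).
  { unfold Cmod; simpl. 
    assert (E := sin2_cos2 (Im z * ln b)). unfold Rsqr in E.
    replace (cos (Im z * ln b) * (cos (Im z * ln b) * 1) + sin (Im z * ln b) * (sin (Im z * ln b) * 1)) with 1 by nra.
    apply sqrt_1. }
  rewrite E. ring.
Qed.

Lemma cpowR_neq0 b z : cpowR b z <> RtoC 0.
Proof.
  intros H. assert (Hc := cpowR_Cmod b z). rewrite H, Cmod_0 in Hc.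
  generalize (exp_pos (Re z * ln b)); lra.
Qed.

Lemma cpowR_mult_base x y z : 0 < x -> 0 < y ->
  cpowR (x * y) z = Cmult (cpowR x z) (cpowR y z).
Proof.
  intros Hx Hy. destruct z as [a b]. unfold cpowR, Cmult, RtoC; simpl.
  rewrite ln_mult; auto.
  rewrite !Rmult_plus_distr_l, exp_plus, cos_plus, sin_plus.
  apply injective_projections; simpl; ring.
Qed.

Lemma qpoch_S a p n : qpoch a p (S n) = Cmult (qpoch a p n) (Cminus (RtoC 1) (Cmult a (RtoC (p ^ n)))).
Proof. unfold qpoch. rewrite cprod_S. reflexivity. Qed.

Lemma qpoch_0 a p : qpoch a p 0 = RtoC 1.
Proof. reflexivity. Qed.

Lemma qpoch_shift a p n :
  qpoch a p (S n) = Cmult (Cminus (RtoC 1) a) (qpoch (Cmult a (RtoC p)) p n).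
Proof.
  induction n.
  - rewrite qpoch_S, !qpoch_0. simpl. rewrite Cmult_1_r. ring.
  - rewrite qpoch_S, IHn, (qpoch_S _ p n). simpl.
    rewrite RtoC_mult. ring.
Qed.

Lemma qpoch_bound_aux a p n : 0 <= p < 1 ->
  Cmod (qpoch a p n) <= exp (Cmod a * (1 - p ^ n) / (1 - p)).
Proof.
  intros Hp. induction n.
  - rewrite qpoch_0, Cmod_1. simpl. replace (Cmod a * (1 - 1) / (1 - p)) with 0 by (field; lra).
    rewrite exp_0; lra.
  - rewrite qpoch_S, Cmod_mult.
    assert (Hf : Cmod (Cminus (RtoC 1) (Cmult a (RtoC (p ^ n)))) <= 1 + Cmod a * p ^ n).
    { unfold Cminus. eapply Rle_trans. apply Cmod_triangle.
      rewrite Cmod_opp, Cmod_mult, Cmod_1, Cmod_R, Rabs_pos_eq. lra. apply pow_le; lra. }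
    assert (H1 : 1 + Cmod a * p ^ n <= exp (Cmod a * p ^ n)) by apply exp_ineq1_le.
    replace (Cmod a * (1 - p ^ S n) / (1 - p)) with
       (Cmod a * (1 - p ^ n) / (1 - p) + Cmod a * p ^ n) by (simpl; field; lra).
    rewrite exp_plus.
    apply Rmult_le_compat; auto using Cmod_ge_0.
    lra.
Qed.

Lemma exp_le x y : x <= y -> exp x <= exp y.
Proof. intros [H|H]. left; apply exp_increasing; auto. subst; lra. Qed.

Lemma qpoch_bound a p n : 0 <= p < 1 ->
  Cmod (qpoch a p n) <= exp (Cmod a / (1 - p)).
Proof.
  intros Hp. eapply Rle_trans. apply qpoch_bound_aux; auto.
  apply exp_le. unfold Rdiv. apply Rmult_le_compat_r.
  left; apply Rinv_0_lt_compat; lra.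
  assert (0 <= p ^ n) by (apply pow_le; lra).
  assert (0 <= Cmod a) by apply Cmod_ge_0. nra.
Qed.

Lemma qpoch_conv a p : 0 <= p < 1 -> exists l, climit (qpoch a p) l.
Proof.
  intros Hp.
  apply (climit_conv _ (fun n => exp (Cmod a / (1 - p)) * Cmod a * p ^ n)).
  - intros n. rewrite qpoch_S.
    replace (Cminus (Cmult (qpoch a p n) (Cminus (RtoC 1) (Cmult a (RtoC (p ^ n))))) (qpoch a p n))
      with (Copp (Cmult (qpoch a p n) (Cmult a (RtoC (p ^ n))))) by ring.
    rewrite Cmod_opp, !Cmod_mult, Cmod_R, Rabs_pos_eq by (apply pow_le; lra).
    rewrite Rmult_assoc. apply Rmult_le_compat_r.
    apply Rmult_le_pos. apply Cmod_ge_0. apply pow_le; lra.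
    apply qpoch_bound; auto.
  - apply (ex_series_ext (fun n => scal (exp (Cmod a / (1 - p)) * Cmod a) (p ^ n))).
    intros n. reflexivity.
    apply (ex_series_scal_l (K:=R_AbsRing) (V:=R_NormedModule)). apply ex_series_geom. rewrite Rabs_pos_eq; lra.
Qed.

Lemma qpoch_inf_spec a p : 0 <= p < 1 -> climit (qpoch a p) (qpoch_inf a p).
Proof.
  intros Hp. destruct (qpoch_conv a p Hp) as [l Hl].
  unfold qpoch_inf. rewrite (climit_CLim (fun k => qpoch a p k) _ Hl). auto.
Qed.

Lemma qpoch_inf_shift a p : 0 <= p < 1 ->
  qpoch_inf a p = Cmult (Cminus (RtoC 1) a) (qpoch_inf (Cmult a (RtoC p)) p).
Proof.
  intros Hp.
  assert (H1 := climit_shift _ _ (qpoch_inf_spec a p Hp)).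
  assert (H2 := climit_scal _ _ (Cminus (RtoC 1) a) (qpoch_inf_spec (Cmult a (RtoC p)) p Hp)).
  rewrite <- (climit_CLim _ _ H1), <- (climit_CLim _ _ H2).
  f_equal. apply functional_extensionality. intros n. apply qpoch_shift.
Qed.

Lemma qpoch_inf_bound a p : 0 <= p < 1 ->
  Cmod (qpoch_inf a p) <= 2 * exp (Cmod a / (1 - p)).
Proof.
  intros Hp. apply (climit_bound (qpoch a p)). apply qpoch_inf_spec; auto.
  intros; apply qpoch_bound; auto.
Qed.

Ltac carg := repeat progress (rewrite ?plus_INR, ?mult_INR, ?S_INR); apply injective_projections; simpl; ring.

Definition cc q nu k := Cdiv (Cmult (RtoC ((-1)^k * q^(k*(k+1))))
   (qpoch_inf (cpowR q (Cplus (Cmult (RtoC 2) nu) (RtoC (INR (2*k+2))))) (q^2)))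
   (qpoch (RtoC (q^2)) (q^2) k).

Definition ST q nu x k := Cmult (cc q nu k) (RtoC (x^(2*k))).

Lemma HEJ_eq q nu x : HEJ q nu x =
  Cmult (Cdiv (cpowR x nu) (qpoch_inf (RtoC (q ^ 2)) (q ^ 2))) (cseries (ST q nu x)).
Proof. reflexivity. Qed.

Lemma pow_le1 r n : 0 <= r <= 1 -> r ^ n <= 1.
Proof. intros H. induction n; simpl. lra. assert (0 <= r ^ n) by (apply pow_le; lra). nra. Qed.

Lemma QQ_bound q k : 0 < q < 1 -> (1 - q^2) ^ k <= Cmod (qpoch (RtoC (q^2)) (q^2) k).
Proof.
  intros Hq. induction k.
  - rewrite qpoch_0, Cmod_1. simpl; lra.
  - rewrite qpoch_S, Cmod_mult.
    rewrite <- RtoC_mult, <- RtoC_minus, Cmod_R.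
    assert (0 <= (q^2)^k <= 1). { split. apply pow_le; nra. apply pow_le1; nra. }
    rewrite Rabs_pos_eq by nra. rewrite <- tech_pow_Rmult.
    assert (0 <= (1 - q^2)^k) by (apply pow_le; nra).
    rewrite Rmult_comm.
    apply Rmult_le_compat; auto; nra.
Qed.

Lemma QQ_neq0 q k : 0 < q < 1 -> qpoch (RtoC (q^2)) (q^2) k <> RtoC 0.
Proof.
  intros Hq E. assert (H := QQ_bound q k Hq). rewrite E, Cmod_0 in H.
  assert (0 < (1 - q^2)^k) by (apply pow_lt; nra). lra.
Qed.

Definition dd q y k := q ^ (k * (k + 1)) * y ^ k.

Lemma dd_series q y : 0 < q < 1 -> 0 < y -> ex_series (dd q y).
Proof.
  intros Hq Hy.
  apply (ex_series_ext (fun n => Rabs (dd q y n))).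
  { intros n. apply Rabs_pos_eq. unfold dd. apply Rmult_le_pos; apply pow_le; lra. }
  apply (ex_series_DAlembert _ 0). lra.
  { intros n. unfold dd. apply Rmult_integral_contrapositive; split; apply pow_nonzero; lra. }
  apply (is_lim_seq_ext (fun n => (q^2)^(S n) * y)).
  { intros n. unfold dd. 
    replace (S n * (S n + 1))%nat with (n * (n+1) + 2 * S n)%nat by lia.
    rewrite pow_add, <- (pow_mult q 2 (S n)). simpl (y ^ S n).
    rewrite Rabs_pos_eq. field. split; apply pow_nonzero; lra.
    unfold Rdiv. apply Rmult_le_pos. repeat apply Rmult_le_pos; try apply pow_le; lra.
    left; apply Rinv_0_lt_compat. apply Rmult_lt_0_compat; apply pow_lt; lra. }
  replace (Finite 0) with (Rbar_mult 0 y) by (simpl; f_equal; ring).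
  apply (is_lim_seq_scal_r (fun n => (q^2)^(S n))).
  apply (is_lim_seq_incr_1 (fun n => (q^2)^n)). apply is_lim_seq_geom.
  rewrite Rabs_pos_eq; nra.
Qed.

Lemma Re_2nu_bound q nu k : 0 < q < 1 ->
  Cmod (cpowR q (Cplus (Cmult (RtoC 2) nu) (RtoC (INR (2*k+2))))) <= exp (Re (Cmult (RtoC 2) nu) * ln q).
Proof.
  intros Hq. rewrite cpowR_Cmod. apply exp_le.
  replace (Re (Cplus (Cmult (RtoC 2) nu) (RtoC (INR (2 * k + 2))))) with
     (Re (Cmult (RtoC 2) nu) + INR (2*k+2)) by reflexivity.
  assert (ln q < 0) by (rewrite <- ln_1; apply ln_increasing; lra).
  assert (0 <= INR (2*k+2)) by apply pos_INR. nra.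
Qed.

Lemma ST_bound q nu x k : 0 < q < 1 -> 0 < x ->
  Cmod (ST q nu x k) <= (2 * exp (exp (Re (Cmult (RtoC 2) nu) * ln q) / (1 - q^2))) *
                         dd q (x^2 / (1 - q^2)) k.
Proof.
  intros Hq Hx. unfold ST, cc, Cdiv, dd.
  rewrite !Cmod_mult, Cmod_inv by (apply QQ_neq0; auto).
  rewrite !Cmod_R.
  rewrite Rabs_mult, pow_1_abs, Rmult_1_l.
  rewrite !Rabs_pos_eq by (apply pow_le; lra).
  set (P := qpoch_inf _ _).
  assert (HP : Cmod P <= 2 * exp (exp (Re (Cmult (RtoC 2) nu) * ln q) / (1 - q^2))).
  { eapply Rle_trans. apply qpoch_inf_bound. split. apply pow_le; lra. nra.
    apply Rmult_le_compat_l. lra. apply exp_le. unfold Rdiv. apply Rmult_le_compat_r.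
    left; apply Rinv_0_lt_compat; nra. apply Re_2nu_bound; auto. }
  assert (HQ := QQ_bound q k Hq).
  assert (0 < (1 - q^2)^k) by (apply pow_lt; nra).
  unfold Rdiv at 2. rewrite Rpow_mult_distr, pow_inv, <- pow_mult, (Nat.mul_comm 2 k).
  assert (0 <= Cmod P) by apply Cmod_ge_0.
  assert (0 <= q ^ (k * (k+1))) by (apply pow_le; lra).
  assert (0 <= x ^ (k * 2)) by (apply pow_le; lra).
  assert (/ Cmod (qpoch (RtoC (q ^ 2)) (q ^ 2) k) <= / (1 - q^2)^k).
  { apply Rinv_le_contravar; auto. }
  unfold Rdiv. 
  assert (0 < / (1 - q^2)^k) by (apply Rinv_0_lt_compat; auto).
  assert (0 <= / Cmod (qpoch (RtoC (q ^ 2)) (q ^ 2) k)) by (left; apply Rinv_0_lt_compat; lra).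
  replace (2 * exp (exp (Re (Cmult (RtoC 2) nu) * ln q) * / (1 - q ^ 2)) *
           (q ^ (k * (k + 1)) * (x ^ (k * 2) * / (1 - q ^ 2) ^ k)))
   with ((q ^ (k * (k + 1)) * (2 * exp (exp (Re (Cmult (RtoC 2) nu) * ln q) * / (1 - q ^ 2)))) *
           (/ (1 - q ^ 2) ^ k) * x ^ (k * 2)) by ring.
  apply Rmult_le_compat_r; auto.
  apply Rmult_le_compat; auto.
  apply Rmult_le_pos; auto.
  apply Rmult_le_compat_l; auto.
Qed.

Lemma ST_conv q nu x : 0 < q < 1 -> 0 < x -> exists l, climit (fun n => csum n (ST q nu x)) l.
Proof.
  intros Hq Hx.
  apply (climit_conv _ (fun k => (2 * exp (exp (Re (Cmult (RtoC 2) nu) * ln q) / (1 - q^2))) *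
                         dd q (x^2 / (1 - q^2)) k)).
  - intros n. rewrite csum_S. replace (Cminus (Cplus (csum n (ST q nu x)) (ST q nu x n)) (csum n (ST q nu x)))
      with (ST q nu x n) by ring. apply ST_bound; auto.
  - apply (ex_series_ext (fun n => scal (2 * exp (exp (Re (Cmult (RtoC 2) nu) * ln q) / (1 - q^2))) (dd q (x ^ 2 / (1 - q ^ 2)) n))).
    reflexivity.
    apply (ex_series_scal_l (K:=R_AbsRing) (V:=R_NormedModule)). apply dd_series; auto.
    unfold Rdiv. apply Rmult_lt_0_compat. apply pow_lt; lra. apply Rinv_0_lt_compat; nra.
Qed.

Lemma ST_spec q nu x : 0 < q < 1 -> 0 < x -> climit (fun n => csum n (ST q nu x)) (cseries (ST q nu x)).
Proof.
  intros Hq Hx. destruct (ST_conv q nu x Hq Hx) as [l Hl].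
  unfold cseries. rewrite (climit_CLim _ _ Hl). auto.
Qed.

Lemma cc_rel1 q nu k : 0 < q < 1 ->
  cc q (Cminus nu (RtoC 1)) k =
  Cmult (Cminus (RtoC 1) (Cmult (cpowR q (Cmult (RtoC 2) nu)) (RtoC (q^(2*k))))) (cc q nu k).
Proof.
  intros Hq. unfold cc.
  rewrite qpoch_inf_shift by (split; [apply pow_le; lra | nra]).
  assert (E1 : Cplus (Cmult (RtoC 2) (Cminus nu (RtoC 1))) (RtoC (INR (2 * k + 2)))
             = Cplus (Cmult (RtoC 2) nu) (RtoC (INR (2*k)))) by carg.
  assert (E2 : Cplus (Cplus (Cmult (RtoC 2) nu) (RtoC (INR (2*k)))) (RtoC (INR 2))
             = Cplus (Cmult (RtoC 2) nu) (RtoC (INR (2*k+2)))) by carg.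
  rewrite E1, cpowR_addn by lra.
  rewrite <- Cmult_assoc, <- RtoC_mult, <- pow_add.
  rewrite <- (cpowR_addn q (Cmult (RtoC 2) nu) (2*k+2)) by lra.
  unfold Cdiv. ring.
Qed.

Lemma pow_qk_lt1 q n : 0 < q < 1 -> (0 < n)%nat -> q ^ n < 1.
Proof.
  intros Hq Hn. destruct n. lia. simpl.
  assert (q ^ n <= 1) by (apply pow_le1; lra). assert (0 <= q^n) by (apply pow_le; lra). nra.
Qed.

Lemma one_minus_neq0 q n : 0 < q < 1 -> (0 < n)%nat -> Cminus (RtoC 1) (RtoC (q ^ n)) <> RtoC 0.
Proof.
  intros Hq Hn E. assert (H := pow_qk_lt1 q n Hq Hn).
  rewrite <- RtoC_minus in E. apply RtoC_inj in E. lra.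
Qed.

Lemma cc_rel2 q nu k : 0 < q < 1 ->
  Cmult (cc q nu (S k)) (Cminus (RtoC 1) (RtoC (q^(2*k+2)))) =
  Copp (Cmult (RtoC (q^(2*k+2))) (cc q (Cplus nu (RtoC 1)) k)).
Proof.
  intros Hq. unfold cc.
  assert (E1 : Cplus (Cmult (RtoC 2) nu) (RtoC (INR (2 * S k + 2)))
             = Cplus (Cmult (RtoC 2) (Cplus nu (RtoC 1))) (RtoC (INR (2*k+2)))) by carg.
  rewrite E1.
  assert (R1 : (-1)^(S k) * q^(S k * (S k+1)) = - ((-1)^k * q^(k*(k+1)) * q^(2*k+2))).
  { replace (S k * (S k + 1))%nat with (k * (k+1) + (2*k+2))%nat by lia.
    rewrite pow_add. simpl. ring. }
  assert (R2 : q^2 * (q^2)^k = q^(2*k+2)).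
  { rewrite <- pow_mult, <- pow_add. f_equal. lia. }
  rewrite R1, qpoch_S, <- RtoC_mult, R2.
  rewrite RtoC_opp, !RtoC_mult.
  field. split; first [apply QQ_neq0; auto | apply one_minus_neq0; auto; lia].
Qed.

Lemma ST_rel q nu x n : 0 < q < 1 ->
  ST q (Cminus nu (RtoC 1)) x (S n) =
  Cminus (Cmult (Cminus (RtoC 1) (cpowR q (Cmult (RtoC 2) nu))) (ST q nu x (S n)))
         (Cmult (Cmult (cpowR q (Cmult (RtoC 2) nu)) (RtoC (q^2 * x^2))) (ST q (Cplus nu (RtoC 1)) (x*q) n)).
Proof.
  intros Hq. unfold ST. rewrite cc_rel1 by auto.
  assert (H := cc_rel2 q nu n Hq).
  assert (Hn : Cminus (RtoC 1) (RtoC (q ^ (2 * n + 2))) <> RtoC 0) by (apply one_minus_neq0; auto; lia).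
  replace (cc q nu (S n)) with (Cdiv (Cmult (cc q nu (S n)) (Cminus (RtoC 1) (RtoC (q ^ (2 * n + 2))))) (Cminus (RtoC 1) (RtoC (q ^ (2 * n + 2))))) by (field; auto).
  rewrite H.
  assert (E1 : q ^ (2 * S n) = q^2 * q^(2*n)) by (rewrite <- pow_add; f_equal; lia).
  assert (E2 : q ^ (2 * n + 2) = q^2 * q^(2*n)) by (rewrite <- pow_add; f_equal; lia).
  assert (E3 : x ^ (2 * S n) = x^2 * x^(2*n)) by (rewrite <- pow_add; f_equal; lia).
  assert (E4 : (x * q) ^ (2 * n) = x^(2*n) * q^(2*n)) by (apply Rpow_mult_distr).
  rewrite E2 in *. rewrite E1, E3, E4. rewrite !RtoC_mult.
  rewrite !RtoC_mult in Hn.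
  field. auto.
Qed.

Lemma S_rel q nu x : 0 < q < 1 -> 0 < x ->
  cseries (ST q (Cminus nu (RtoC 1)) x) =
  Cminus (Cmult (Cminus (RtoC 1) (cpowR q (Cmult (RtoC 2) nu))) (cseries (ST q nu x)))
         (Cmult (Cmult (cpowR q (Cmult (RtoC 2) nu)) (RtoC (q^2 * x^2))) (cseries (ST q (Cplus nu (RtoC 1)) (x*q)))).
Proof.
  intros Hq Hx.
  set (t := cpowR q (Cmult (RtoC 2) nu)).
  assert (Hseq : forall n, csum (S n) (ST q (Cminus nu (RtoC 1)) x) =
     Cplus (Cmult (Cminus (RtoC 1) t) (csum (S n) (ST q nu x)))
           (Cmult (Copp (Cmult t (RtoC (q^2 * x^2)))) (csum n (ST q (Cplus nu (RtoC 1)) (x*q))))).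
  { induction n.
    - rewrite csum_S, csum_S, !csum_0. unfold ST. rewrite cc_rel1 by auto.
      simpl (q ^ (2*0)). simpl (x ^ (2*0)). fold t. ring.
    - rewrite csum_S, IHn, (csum_S (S n) (ST q nu x)), (csum_S n (ST q (Cplus nu (RtoC 1)) (x*q))). rewrite ST_rel by auto. fold t. ring. }
  assert (L1 := climit_shift _ _ (ST_spec q (Cminus nu (RtoC 1)) x Hq Hx)).
  assert (L2 := climit_plus _ _ _ _
     (climit_scal _ _ (Cminus (RtoC 1) t) (climit_shift _ _ (ST_spec q nu x Hq Hx)))
     (climit_scal _ _ (Copp (Cmult t (RtoC (q^2 * x^2))))
        (ST_spec q (Cplus nu (RtoC 1)) (x*q) Hq ltac:(nra)))).
  rewrite <- (climit_CLim _ _ L1).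
  transitivity (CLim_seq (fun n => Cplus (Cmult (Cminus (RtoC 1) t) (csum (S n) (ST q nu x)))
           (Cmult (Copp (Cmult t (RtoC (q^2 * x^2)))) (csum n (ST q (Cplus nu (RtoC 1)) (x*q)))))).
  f_equal. apply functional_extensionality. apply Hseq.
  rewrite (climit_CLim _ _ L2). unfold Cminus. ring.
Qed.

Lemma cpowR_plus1 b z : 0 < b -> cpowR b (Cplus z (RtoC 1)) = Cmult (cpowR b z) (RtoC b).
Proof. intros. rewrite cpowR_add, cpowR_R, Rmult_1_l, exp_ln; auto. Qed.

Lemma cpowR_0 b : cpowR b (RtoC 0) = RtoC 1.
Proof. rewrite cpowR_R, Rmult_0_l, exp_0. reflexivity. Qed.

Lemma HEJ_rel q nu y : 0 < q < 1 -> 0 < y ->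
  HEJ q (Cplus nu (RtoC 1)) (y * q) =
  Cmult (cpowR q (Copp (Cplus nu (RtoC 1))))
   (Cminus (Cmult (Cdiv (Cminus (RtoC 1) (cpowR q (Cmult (RtoC 2) nu))) (RtoC y)) (HEJ q nu y))
           (HEJ q (Cminus nu (RtoC 1)) y)).
Proof.
  intros Hq Hy. rewrite !HEJ_eq. rewrite S_rel by auto.
  rewrite cpowR_mult_base by lra. rewrite !cpowR_plus1 by lra.
  assert (Hm : cpowR y nu = Cmult (cpowR y (Cminus nu (RtoC 1))) (RtoC y)).
  { rewrite <- cpowR_plus1 by lra. f_equal. ring. }
  assert (Hi : Cmult (cpowR q (Copp (Cplus nu (RtoC 1)))) (Cmult (cpowR q nu) (RtoC q)) = RtoC 1).
  { rewrite <- (cpowR_plus1 q nu), <- cpowR_add by lra. rewrite <- (cpowR_0 q). f_equal. ring. }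
  assert (Ht : cpowR q (Cmult (RtoC 2) nu) = Cmult (cpowR q nu) (cpowR q nu)).
  { rewrite <- cpowR_add. f_equal. ring. }
  assert (HN := cpowR_neq0 q nu).
  assert (Hyq : RtoC y <> RtoC 0) by (intro E; apply RtoC_inj in E; lra).
  assert (Hqq : RtoC q <> RtoC 0) by (intro E; apply RtoC_inj in E; lra).
  set (iQ := qpoch_inf (RtoC (q ^ 2)) (q ^ 2)).
  set (Yv := cpowR y (Cminus nu (RtoC 1))) in *.
  set (M := cpowR q (Copp (Cplus nu (RtoC 1)))) in *.
  rewrite Hm, Ht.
  replace M with (Cdiv (RtoC 1) (Cmult (cpowR q nu) (RtoC q))).
  2:{ rewrite <- Hi. field. auto. }
  rewrite !RtoC_mult. unfold Cdiv. simpl. rewrite !RtoC_mult. set (jQ := Cinv iQ). field. auto.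
Qed.

Lemma qpoch_shift' a p n : Cminus (RtoC 1) a <> RtoC 0 ->
  qpoch (Cmult a (RtoC p)) p n = Cdiv (qpoch a p (S n)) (Cminus (RtoC 1) a).
Proof. intros H. rewrite qpoch_shift. field. auto. Qed.

Lemma t_shift q z : 0 < q -> cpowR q (Cmult (RtoC 2) (Cplus z (RtoC 1))) = Cmult (cpowR q (Cmult (RtoC 2) z)) (RtoC (q^2)).
Proof.
  intros Hq. rewrite <- (cpowR_addn q _ 2) by auto. f_equal. carg.
Qed.

Definition hnuP q nu := forall i : nat,
     cpowR q (Cplus (Cmult (RtoC 2) nu) (RtoC (2 * INR i))) <> RtoC 1.

Lemma tfac_neq0 q nu n : 0 < q -> hnuP q nu ->
  Cminus (RtoC 1) (Cmult (cpowR q (Cmult (RtoC 2) nu)) (RtoC ((q^2)^n))) <> RtoC 0.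
Proof.
  intros Hq hnu E. apply (hnu n).
  replace (RtoC (2 * INR n)) with (RtoC (INR (2 * n))) by (rewrite mult_INR; reflexivity).
  rewrite cpowR_addn, pow_mult by auto.
  replace (Cmult (cpowR q (Cmult (RtoC 2) nu)) (RtoC ((q ^ 2) ^ n))) with
    (Cminus (RtoC 1) (Cminus (RtoC 1) (Cmult (cpowR q (Cmult (RtoC 2) nu)) (RtoC ((q ^ 2) ^ n))))) by ring.
  rewrite E. ring.
Qed.

Lemma tpoch_neq0 q nu n : 0 < q -> hnuP q nu ->
  qpoch (cpowR q (Cmult (RtoC 2) nu)) (q^2) n <> RtoC 0.
Proof.
  intros Hq hnu. induction n.
  - rewrite qpoch_0. intro E. apply RtoC_inj in E. lra.
  - rewrite qpoch_S. apply Cmult_neq_0; auto. apply tfac_neq0; auto.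
Qed.

Lemma Qfac_neq0 q n : 0 < q < 1 ->
  Cminus (RtoC 1) (Cmult (RtoC (q^2)) (RtoC ((q^2)^n))) <> RtoC 0.
Proof.
  intros Hq. rewrite <- RtoC_mult, <- pow_mult, <- pow_add. apply one_minus_neq0; auto. lia.
Qed.

Lemma RtoC_neq0 r : r <> 0 -> RtoC r <> RtoC 0.
Proof. intros H E. apply RtoC_inj in E. auto. Qed.

Lemma I1 q nu k g : 0 < q < 1 -> hnuP q nu ->
 coef_a q nu (S (2*k+2+g)) (S k) =
 Cplus (Cdiv (Cmult (Cmult (coef_a q (Cplus nu (RtoC 1)) (2*k+2+g) (S k)) (cpowR q (Copp (Cplus nu (RtoC 1)))))
                    (Cminus (RtoC 1) (cpowR q (Cmult (RtoC 2) nu))))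
             (RtoC (q^g * q^(S k))))
       (Cdiv (coef_b q (Cplus nu (RtoC 1)) (2*k+2+g) k) (RtoC (q^(g+1)))).
Proof.
  intros Hq hnu. unfold coef_b, coef_a.
  replace (S (2*k+2+g) - S k)%nat with (k+2+g)%nat by lia.
  replace (S (2*k+2+g) - 2 * S k)%nat with (g+1)%nat by lia.
  replace (2*k+2+g - S k)%nat with (k+1+g)%nat by lia.
  replace (2*k+2+g - 2 * S k)%nat with g by lia.
  replace (2*k+2+g - 1)%nat with (2*k+1+g)%nat by lia.
  replace (2*k+1+g - k)%nat with (k+1+g)%nat by lia.
  replace (2*k+1+g - 2 * k)%nat with (g+1)%nat by lia.
  set (L1 := cpowR q (- (INR (S (2 * k + 2 + g)) * (INR (S (2 * k + 2 + g)) + nu)))%C).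
  set (L2 := cpowR q (INR (S k) * ((3 * INR (S k) - 1)%R + nu))%C).
  set (P1 := cpowR q (- (INR (2 * k + 2 + g) * (INR (2 * k + 2 + g) + (nu + 1))))%C).
  set (P2 := cpowR q (INR (S k) * ((3 * INR (S k) - 1)%R + (nu + 1)))%C).
  set (M := cpowR q (- (nu + 1))%C).
  set (R1 := cpowR q ((2 * INR k - INR (2 * k + 2 + g))%R - (nu + 1))%C).
  set (R2 := cpowR q (- (INR (2 * k + 1 + g) * (INR (2 * k + 1 + g) + (nu + 1 + 1))))%C).
  set (R3 := cpowR q (INR k * ((3 * INR k - 1)%R + (nu + 1 + 1)))%C).
  assert (H1 : Cmult (Cmult P1 P2) M = Cmult (Cmult L1 L2) (RtoC (q^(3*k+3+g)))).
  { unfold P1, P2, M, L1, L2. rewrite <- !cpowR_add, <- cpowR_addn by lra. f_equal. carg. }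
  assert (H2 : Cmult (Cmult R1 R2) R3 = Cmult (Cmult L1 L2) (RtoC (q^(g+1)))).
  { unfold R1, R2, R3, L1, L2. rewrite <- !cpowR_add, <- cpowR_addn by lra. f_equal. carg. }
  assert (HP1 : P1 = Cdiv (Cmult (Cmult L1 L2) (RtoC (q^(3*k+3+g)))) (Cmult P2 M)).
  { rewrite <- H1. field. split; apply cpowR_neq0. }
  assert (HR1 : R1 = Cdiv (Cmult (Cmult L1 L2) (RtoC (q^(g+1)))) (Cmult R2 R3)).
  { rewrite <- H2. field. split; apply cpowR_neq0. }
  rewrite HP1, HR1. clear H1 H2 HP1 HR1.
  rewrite !t_shift by lra.
  assert (N1 := tfac_neq0 q nu 0 ltac:(lra) hnu).
  assert (N2 := tfac_neq0 q nu 1 ltac:(lra) hnu).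
  assert (N3 := tfac_neq0 q nu (S k) ltac:(lra) hnu).
  assert (N4 := tfac_neq0 q nu k ltac:(lra) hnu).
  assert (N5 := tpoch_neq0 q nu k ltac:(lra) hnu).
  assert (N6 := Qfac_neq0 q g Hq). assert (N7 := Qfac_neq0 q k Hq).
  assert (N8 := QQ_neq0 q g Hq). assert (N9 := QQ_neq0 q k Hq).
  assert (N10 : RtoC q <> RtoC 0) by (apply RtoC_neq0; lra).
  assert (N11 : RtoC (q^k) <> RtoC 0) by (apply RtoC_neq0, pow_nonzero; lra).
  assert (N12 : RtoC (q^g) <> RtoC 0) by (apply RtoC_neq0, pow_nonzero; lra).
  assert (P2n := cpowR_neq0 q (INR (S k) * ((3 * INR (S k) - 1)%R + (nu + 1)))%C).
  assert (Mn := cpowR_neq0 q (- (nu + 1))%C).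
  assert (R2n := cpowR_neq0 q (- (INR (2 * k + 1 + g) * (INR (2 * k + 1 + g) + (nu + 1 + 1))))%C).
  assert (R3n := cpowR_neq0 q (INR k * ((3 * INR k - 1)%R + (nu + 1 + 1)))%C).
  fold P2 M R2 R3 in P2n, Mn, R2n, R3n.
  rewrite pow_O, Cmult_1_r in N1. rewrite pow_1 in N2.
  assert (N2' := N2).
  set (t := cpowR q (Cmult (RtoC 2) nu)) in *.
  rewrite !(qpoch_shift' (Cmult t (RtoC (q^2)))).
  rewrite !(qpoch_shift' t).
  replace (k+2+g)%nat with (S (k+1+g)) by lia.
  replace (g+1)%nat with (S g) by lia.
  rewrite !qpoch_S.
  set (rk := q^k). set (sg := q^g). set (mk := (-1)^k).
  assert (E1 : (q^2)^(k+1+g) = q^2 * (rk*rk) * (sg*sg)) by (unfold rk, sg; rewrite <- ?pow_mult, <- ?pow_add; f_equal; lia).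
  assert (E2 : (q^2)^(S (k+1+g)) = q^2 * q^2 * (rk*rk) * (sg*sg)) by (unfold rk, sg; rewrite <- ?pow_mult, <- ?pow_add; f_equal; lia).
  assert (E3 : (q^2)^k = rk*rk) by (unfold rk, sg; rewrite <- ?pow_mult, <- ?pow_add; f_equal; lia).
  assert (E4 : (q^2)^(S k) = q^2*(rk*rk)) by (unfold rk, sg; rewrite <- ?pow_mult, <- ?pow_add; f_equal; lia).
  assert (E5 : (q^2)^g = sg*sg) by (unfold rk, sg; rewrite <- ?pow_mult, <- ?pow_add; f_equal; lia).
  assert (E6 : q^(3*k+3+g) = rk*rk*rk*q^3*sg) by (unfold rk, sg; rewrite <- ?pow_mult, <- ?pow_add; f_equal; lia).
  assert (E7 : q^(S k) = q^1*rk) by (unfold rk, sg; rewrite <- ?pow_mult, <- ?pow_add; f_equal; lia).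
  assert (E8 : q^(S g) = sg*q^1) by (unfold rk, sg; rewrite <- ?pow_mult, <- ?pow_add; f_equal; lia).
  assert (E9 : (-1)^(S k) = - mk) by (unfold mk; simpl; ring).
  rewrite E1, E2, E3, E4, E5, E6, E7, E8, E9.
  rewrite E4 in N3. rewrite E3 in N4. rewrite E5 in N6. rewrite E3 in N7.
  rewrite ?RtoC_mult, ?RtoC_opp, ?RtoC_pow.
  repeat rewrite RtoC_mult in N3. repeat rewrite RtoC_mult in N4.
  repeat rewrite RtoC_mult in N6. repeat rewrite RtoC_mult in N7.
  repeat rewrite RtoC_pow in N2'. repeat rewrite RtoC_pow in N3. repeat rewrite RtoC_pow in N6.
  repeat rewrite RtoC_pow in N7. repeat rewrite RtoC_pow in N8. repeat rewrite RtoC_pow in N9.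
  field. cbv beta. repeat split; auto.
  all: auto.
Qed.

Lemma hnu_shift q nu : hnuP q nu -> hnuP q (Cplus nu (RtoC 1)).
Proof.
  intros hnu i. specialize (hnu (S i)).
  replace (Cplus (Cmult (RtoC 2) (Cplus nu (RtoC 1))) (RtoC (2 * INR i)))
    with (Cplus (Cmult (RtoC 2) nu) (RtoC (2 * INR (S i)))); auto.
  carg.
Qed.

Lemma I0 q nu m : 0 < q < 1 -> hnuP q nu ->
 coef_a q nu (S m) 0 =
 Cdiv (Cmult (Cmult (coef_a q (Cplus nu (RtoC 1)) m 0) (cpowR q (Copp (Cplus nu (RtoC 1)))))
                    (Cminus (RtoC 1) (cpowR q (Cmult (RtoC 2) nu))))
      (RtoC (q^m)).
Proof.
  intros Hq hnu. unfold coef_a.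
  replace (S m - 0)%nat with (S m) by lia.
  replace (S m - 2 * 0)%nat with (S m) by lia.
  replace (m - 0)%nat with m by lia.
  replace (m - 2 * 0)%nat with m by lia.
  set (L1 := cpowR q (- (INR (S m) * (INR (S m) + nu)))%C).
  set (L2 := cpowR q (INR 0 * ((3 * INR 0 - 1)%R + nu))%C).
  set (P1 := cpowR q (- (INR m * (INR m + (nu + 1))))%C).
  set (P2 := cpowR q (INR 0 * ((3 * INR 0 - 1)%R + (nu + 1)))%C).
  set (M := cpowR q (- (nu + 1))%C).
  assert (H1 : Cmult (Cmult P1 P2) M = Cmult (Cmult L1 L2) (RtoC (q^m))).
  { unfold P1, P2, M, L1, L2. rewrite <- !cpowR_add, <- cpowR_addn by lra. f_equal. carg. }
  assert (P2n := cpowR_neq0 q (INR 0 * ((3 * INR 0 - 1)%R + (nu + 1)))%C).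
  assert (Mn := cpowR_neq0 q (- (nu + 1))%C). fold P2 M in P2n, Mn.
  assert (HP1 : P1 = Cdiv (Cmult (Cmult L1 L2) (RtoC (q^m))) (Cmult P2 M)).
  { rewrite <- H1. field. split; auto. }
  rewrite HP1. clear H1 HP1.
  rewrite t_shift by lra.
  assert (N1 := tfac_neq0 q nu 0 ltac:(lra) hnu).
  rewrite pow_O, Cmult_1_r in N1.
  set (t := cpowR q (Cmult (RtoC 2) nu)) in *.
  rewrite (qpoch_shift' t) by auto.
  assert (N2 := QQ_neq0 q m Hq). assert (N3 := QQ_neq0 q (S m) Hq).
  assert (N4 : RtoC (q^m) <> RtoC 0) by (apply RtoC_neq0, pow_nonzero; lra).
  rewrite !qpoch_0. simpl ((-1)^0).
  field. repeat split; auto.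
Qed.

Lemma I2 q nu k : 0 < q < 1 -> hnuP q nu ->
 coef_a q nu (S (2*k+1)) (S k) = coef_b q (Cplus nu (RtoC 1)) (2*k+1) k.
Proof.
  intros Hq hnu. unfold coef_b, coef_a.
  replace (S (2*k+1) - S k)%nat with (S k) by lia.
  replace (S (2*k+1) - 2 * S k)%nat with 0%nat by lia.
  replace (2*k+1 - 1)%nat with (2*k)%nat by lia.
  replace (2*k - k)%nat with k by lia.
  replace (2*k - 2 * k)%nat with 0%nat by lia.
  set (L1 := cpowR q (- (INR (S (2 * k + 1)) * (INR (S (2 * k + 1)) + nu)))%C).
  set (L2 := cpowR q (INR (S k) * ((3 * INR (S k) - 1)%R + nu))%C).
  set (R1 := cpowR q ((2 * INR k - INR (2 * k + 1))%R - (nu + 1))%C).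
  set (R2 := cpowR q (- (INR (2 * k) * (INR (2 * k) + (nu + 1 + 1))))%C).
  set (R3 := cpowR q (INR k * ((3 * INR k - 1)%R + (nu + 1 + 1)))%C).
  assert (H2 : Cmult (Cmult R1 R2) R3 = Cmult (Cmult L1 L2) (RtoC (q^0))).
  { unfold R1, R2, R3, L1, L2. rewrite <- !cpowR_add, <- cpowR_addn by lra. f_equal. carg. }
  assert (R2n := cpowR_neq0 q (- (INR (2 * k) * (INR (2 * k) + (nu + 1 + 1))))%C).
  assert (R3n := cpowR_neq0 q (INR k * ((3 * INR k - 1)%R + (nu + 1 + 1)))%C).
  fold R2 R3 in R2n, R3n.
  assert (HR1 : R1 = Cdiv (Cmult (Cmult L1 L2) (RtoC (q^0))) (Cmult R2 R3)).
  { rewrite <- H2. field. split; auto. }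
  rewrite HR1. clear H2 HR1.
  assert (N1 := tpoch_neq0 q (Cplus (Cplus nu (RtoC 1)) (RtoC 1)) k ltac:(lra) (hnu_shift _ _ (hnu_shift _ _ hnu))).
  assert (N2 := tpoch_neq0 q nu (S k) ltac:(lra) hnu).
  assert (N3 := QQ_neq0 q k Hq). assert (N4 := QQ_neq0 q (S k) Hq).
  rewrite !qpoch_0. simpl ((-1)^(S k)). simpl (q^0).
  rewrite ?RtoC_mult. replace (RtoC (-1)) with (Copp (RtoC 1)) by (apply injective_projections; simpl; lra).
  field. repeat split; auto.
Qed.

Ltac dv X := let H1 := fresh in let H2 := fresh in
  assert (H1 := Nat.div_mod X 2 ltac:(lia)); assert (H2 := Nat.mod_upper_bound X 2 ltac:(lia)).

Lemma csum_tail n N f : (n <= N)%nat -> (forall i, (n <= i < N)%nat -> f i = RtoC 0) -> csum N f = csum n f.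
Proof.
  intros HnN Hz. induction N.
  - assert (n = 0%nat) by lia. subst. reflexivity.
  - destruct (Nat.eq_dec n (S N)). subst. reflexivity.
    rewrite csum_S, IHN, Hz; try lia. ring. intros; apply Hz; lia.
Qed.

Definition rhs q nu m x :=
  Cplus
    (csum (m / 2 + 1) (fun i =>
       Cmult (Cdiv (coef_a q nu m i) (RtoC (x ^ (m - 2 * i))))
             (HEJ q nu (x * q ^ i))))
    (csum ((m + 1) / 2) (fun j =>
       Cmult (Cdiv (coef_b q nu m j) (RtoC (x ^ (m - 1 - 2 * j))))
             (HEJ q (Cminus nu (RtoC 1)) (x * q ^ j)))).

Lemma base q nu x : 0 < q < 1 -> 0 < x -> HEJ q (Cplus nu (RtoC (INR 0))) (x * q ^ 0) = rhs q nu 0 x.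
Proof.
  intros Hq Hx. unfold rhs. simpl (0/2+1)%nat. simpl ((0+1)/2)%nat.
  rewrite csum_S, !csum_0. unfold coef_a. simpl (0 - 0)%nat. simpl (0 - 2*0)%nat.
  rewrite !qpoch_0.
  replace (Cplus nu (RtoC (INR 0))) with nu by (simpl; carg).
  rewrite <- (cpowR_0 q).
  replace (Copp (Cmult (RtoC (INR 0)) (Cplus (RtoC (INR 0)) nu))) with (RtoC 0) by (simpl; carg).
  replace (Cmult (RtoC (INR 0)) (Cplus (RtoC (3 * INR 0 - 1)) nu)) with (RtoC 0) by (simpl; carg).
  rewrite cpowR_0. simpl. rewrite Rmult_1_r. 
  field.
Qed.

Lemma step q nu m x : 0 < q < 1 -> hnuP q nu -> 0 < x ->
  (forall nu', hnuP q nu' -> forall x', 0 < x' ->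
     HEJ q (Cplus nu' (RtoC (INR m))) (x' * q ^ m) = rhs q nu' m x') ->
  HEJ q (Cplus nu (RtoC (INR (S m)))) (x * q ^ (S m)) = rhs q nu (S m) x.
Proof.
  intros Hq hnu Hx IH.
  replace (Cplus nu (RtoC (INR (S m)))) with (Cplus (Cplus nu (RtoC 1)) (RtoC (INR m))) by carg.
  replace (x * q ^ (S m)) with ((x * q) * q ^ m) by (simpl; ring).
  rewrite IH; [| apply hnu_shift; auto | nra].
  unfold rhs.
  set (M := cpowR q (Copp (Cplus nu (RtoC 1)))).
  set (t := cpowR q (Cmult (RtoC 2) nu)).
  set (Jn := fun i => HEJ q nu (x * q ^ i)).
  set (Jm := fun i => HEJ q (Cminus nu (RtoC 1)) (x * q ^ i)).
  set (al := fun i => Cmult (Cmult (Cdiv (coef_a q (Cplus nu (RtoC 1)) m i) (RtoC ((x*q) ^ (m - 2 * i)))) M)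
                     (Cdiv (Cminus (RtoC 1) t) (RtoC (x * q^i)))).
  set (be := fun i => Copp (Cmult (Cdiv (coef_a q (Cplus nu (RtoC 1)) m i) (RtoC ((x*q) ^ (m - 2 * i)))) M)).
  set (ga := fun j => Cdiv (coef_b q (Cplus nu (RtoC 1)) m j) (RtoC ((x*q) ^ (m - 1 - 2 * j)))).
  set (A := (m/2+1)%nat). set (B := ((m+1)/2)%nat).
  assert (L1 : csum A (fun i => Cmult (Cdiv (coef_a q (Cplus nu (RtoC 1)) m i) (RtoC ((x*q) ^ (m - 2 * i))))
                      (HEJ q (Cplus nu (RtoC 1)) (x * q * q ^ i)))
             = Cplus (csum A (fun i => Cmult (al i) (Jn i))) (csum A (fun i => Cmult (be i) (Jm i)))).
  { rewrite <- csum_plus. apply csum_ext. intros i _.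
    replace (x * q * q ^ i) with ((x * q ^ i) * q) by ring.
    rewrite HEJ_rel; [| auto | apply Rmult_lt_0_compat; [lra | apply pow_lt; lra]].
    unfold al, be, Jn, Jm. fold M t. ring. }
  assert (L2 : csum B (fun j => Cmult (Cdiv (coef_b q (Cplus nu (RtoC 1)) m j) (RtoC ((x*q) ^ (m - 1 - 2 * j))))
                      (HEJ q (Cminus (Cplus nu (RtoC 1)) (RtoC 1)) (x * q * q ^ j)))
             = csum B (fun j => Cmult (ga j) (Jn (S j)))).
  { apply csum_ext. intros j _. unfold ga, Jn.
    replace (Cminus (Cplus nu (RtoC 1)) (RtoC 1)) with nu by ring.
    replace (x * q * q ^ j) with (x * q ^ S j) by (simpl; ring). reflexivity. }
  rewrite L1, L2. clear L1 L2.
  replace ((S m + 1) / 2)%nat with A by (unfold A; dv m; dv (S m + 1)%nat; lia).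
  replace (S m / 2 + 1)%nat with (S B) by (unfold B; dv (S m); dv (m + 1)%nat; lia).
  assert (LB : csum A (fun j => Cmult (Cdiv (coef_b q nu (S m) j) (RtoC (x ^ (S m - 1 - 2 * j))))
                  (HEJ q (Cminus nu (RtoC 1)) (x * q ^ j))) = csum A (fun i => Cmult (be i) (Jm i))).
  { apply csum_ext. intros j Hj.
    assert (Hj2 : (2 * j <= m)%nat) by (unfold A in Hj; dv m; lia).
    change (HEJ q (Cminus nu (RtoC 1)) (x * q ^ j)) with (Jm j). f_equal.
    unfold coef_b, be.
    replace (S m - 1)%nat with m by lia.
    replace (S m - 1 - 2 * j)%nat with (m - 2 * j)%nat by lia.
    assert (HE : Cmult (cpowR q (Cminus (RtoC (2 * INR j - INR (S m))) nu)) (RtoC (q ^ (m - 2 * j))) = M).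
    { rewrite <- cpowR_addn by lra. unfold M. f_equal. rewrite minus_INR by lia. carg. }
    assert (Hq0 : q ^ (m - 2 * j) <> 0) by (apply pow_nonzero; lra).
    replace (cpowR q (Cminus (RtoC (2 * INR j - INR (S m))) nu)) with (Cdiv M (RtoC (q ^ (m - 2 * j)))).
    2:{ rewrite <- HE. field. apply RtoC_neq0; auto. }
    rewrite Rpow_mult_distr, RtoC_mult.
    assert (Hx0 : x ^ (m - 2 * j) <> 0) by (apply pow_nonzero; lra).
    field. split; apply RtoC_neq0; auto. }
  rewrite LB. clear LB.
  assert (LA : csum (S B) (fun i => Cmult (Cdiv (coef_a q nu (S m) i) (RtoC (x ^ (S m - 2 * i))))
                  (HEJ q nu (x * q ^ i))) =
     csum (S B) (fun i => Cplus (if (i <? A)%nat then Cmult (al i) (Jn i) else RtoC 0)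
                                (match i with O => RtoC 0 | S j => Cmult (ga j) (Jn (S j)) end))).
  { apply csum_ext. intros i Hi. change (HEJ q nu (x * q ^ i)) with (Jn i).
    destruct i as [|k].
    - assert (HA : (0 < A)%nat) by (unfold A; lia).
      rewrite (proj2 (Nat.ltb_lt _ _) HA). unfold al.
      rewrite I0 by auto.
      replace (S m - 2 * 0)%nat with (S m) by lia. replace (m - 2 * 0)%nat with m by lia.
      rewrite Rpow_mult_distr. simpl (x ^ S m). simpl (q ^ 0).
      assert (x ^ m <> 0) by (apply pow_nonzero; lra).
      assert (q ^ m <> 0) by (apply pow_nonzero; lra).
      rewrite !RtoC_mult. fold M t. field.
      repeat split; apply RtoC_neq0; lra.
    - destruct (Nat.ltb_spec (S k) A) as [HA|HA].
      + assert (Hg : exists g, m = (2*k+2+g)%nat) by (exists (m - 2 * S k)%nat; unfold A in HA; dv m; lia).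
        destruct Hg as [g Hm]. unfold al, ga. rewrite Hm. rewrite I1 by auto.
        replace (S (2 * k + 2 + g) - 2 * S k)%nat with (g + 1)%nat by lia.
        replace (2 * k + 2 + g - 2 * S k)%nat with g by lia.
        replace (2 * k + 2 + g - 1 - 2 * k)%nat with (g + 1)%nat by lia.
        rewrite !Rpow_mult_distr, !pow_add, !pow_1. simpl (q ^ S k).
        assert (x ^ g <> 0) by (apply pow_nonzero; lra).
        assert (q ^ g <> 0) by (apply pow_nonzero; lra).
        assert (q ^ k <> 0) by (apply pow_nonzero; lra).
        rewrite !RtoC_mult. fold M t. field.
        repeat split; apply RtoC_neq0; lra.
      + assert (Hm : m = (2*k+1)%nat) by (unfold A in HA; unfold B in Hi; dv m; dv (m+1)%nat; lia).
        unfold ga. rewrite Hm. rewrite I2 by auto.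
        replace (S (2 * k + 1) - 2 * S k)%nat with 0%nat by lia.
        replace (2 * k + 1 - 1 - 2 * k)%nat with 0%nat by lia.
        simpl (x ^ 0). simpl ((x * q) ^ 0). field. }
  rewrite LA, csum_plus. clear LA.
  rewrite (csum_tail A (S B)).
  2:{ unfold A, B. dv m; dv (m+1)%nat; lia. }
  2:{ intros i Hi. destruct (Nat.ltb_spec i A); [lia | reflexivity]. }
  rewrite (csum_ext A (fun i => if (i <? A)%nat then Cmult (al i) (Jn i) else RtoC 0) (fun i => Cmult (al i) (Jn i))).
  2:{ intros i Hi. destruct (Nat.ltb_spec i A); [reflexivity | lia]. }
  rewrite csum_shift. ring.
Qed.

Theorem lemma4p4 (q : R) (hq0 : 0 < q) (hq1 : q < 1) (nu : C)
  (hnu : forall i : nat,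
     cpowR q (Cplus (Cmult (RtoC 2) nu) (RtoC (2 * INR i))) <> RtoC 1)
  (m : nat) (x : R) (hx : 0 < x) :
  HEJ q (Cplus nu (RtoC (INR m))) (x * q ^ m) =
  Cplus
    (csum (m / 2 + 1) (fun i =>
       Cmult (Cdiv (coef_a q nu m i) (RtoC (x ^ (m - 2 * i))))
             (HEJ q nu (x * q ^ i))))
    (csum ((m + 1) / 2) (fun j =>
       Cmult (Cdiv (coef_b q nu m j) (RtoC (x ^ (m - 1 - 2 * j))))
             (HEJ q (Cminus nu (RtoC 1)) (x * q ^ j)))).
Proof.
  change (HEJ q (Cplus nu (RtoC (INR m))) (x * q ^ m) = rhs q nu m x).
  assert (Hq : 0 < q < 1) by lra.
  change (hnuP q nu) in hnu.
  revert nu hnu x hx. induction m; intros nu hnu x hx.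
  - apply base; auto.
  - apply step; auto.
Qed.
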